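(* Let $(\Omega,\mathcal R,\mathcal K)$ be a bidirectional kinetic system. Then $(\Omega,\mathcal R,\mathcal K)$ admits a closed completion $(\Omega_c,\mathcal R_c,\mathcal K_c)$ such that $\pi_\Omega R\neq0$ for every $R\in\mathcal R_c$, and every $R\in\mathcal R$ is the image $\pi_\Omega\bar R$ of exactly one $\bar R\in\mathcal R_c$.
   Context: A chemical network is $(\Omega,\mathcal R)$ with $\Omega=\{1,\dots,N\}$ and $\mathcal R$ a finite set of nonzero integer vectors indexed by $\Omega$. $I(R)=\{i:R(i)<0\}$, $F(R)=\{i:R(i)>0\}$. Bidirectional: $R\in\mathcal R\Rightarrow-R\in\mathcal R$; $\mathcal R_s$ contains exactly one of each pair $\{R,-R\}$. Conservation laws $\mathcal M=(\mathrm{span}\,\mathcal R)^\perp$; conservative means $\mathcal M\cap(0,\infty)^\Omega\ne\emptyset$. A kinetic system $(\Omega,\mathcal R,\mathcal K)$ has rates $\mathcal K:\mathcal R\to(0,\infty)$, $K_R=\mathcal K(R)$; it satisfies detailed balance if there is $\bar N\in(0,\infty)^\Omega$ with $K_R\prod_{i\in I(R)}\bar N_i^{-R(i)}=K_{-R}\prod_{i\in F(R)}\bar N_i^{R(i)}$ for all $R\in\mathcal R_s$. It is closed if it satisfies detailed balance, is conservative, and $I(R)\ne\emptyset$, $F(R)\ne\emptyset$ for all $R\in\mathcal R$. For $A\subset\Omega_c$, $\pi_Av=(v(i))_{i\in A}$. Given a kinetic system $(\Omega_c,\mathcal R_c,\mathcal K_c)$ with $\Omega\subset\Omega_c$ and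 positive $n=(n_i)_{i\in\Omega_c\setminus\Omega}$, the reduced rates are $\mathcal K_c[n](R)=\sum_{\bar R\in\mathcal R_c:\pi_\Omega\bar R=R}\mathcal K_c(\bar R)\prod_{s\in(\Omega_c\setminus\Omega)\cap I(\bar R)}n_s^{-\bar R(s)}$ for $R\in\{\pi_\Omega\bar R\}\setminus\{0\}$. A completion of $(\Omega,\mathcal R,\mathcal K)$ is a kinetic system $(\Omega_c,\mathcal R_c,\mathcal K_c)$ with $\Omega\subset\Omega_c$, $\mathcal R=\{\pi_\Omega R:R\in\mathcal R_c\}$, and such that there exist concentrations $n_{\Omega_c\setminus\Omega}=(n_i)_{i\in\Omega_c\setminus\Omega}$ with $\mathcal K=\mathcal K_c[n_{\Omega_c\setminus\Omega}]$. *)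

(* Defs.v *)
From HB Require Import structures.
From mathcomp Require Import all_boot all_order all_algebra.
From mathcomp Require Import finmap.
From mathcomp Require Import reals.
Set Implicit Arguments. Unset Strict Implicit. Unset Printing Implicit Defensive.
Import Order.TTheory GRing.Theory Num.Theory.
Local Open Scope ring_scope.
Local Open Scope fset_scope.

Definition vec (S : finType) := {ffun S -> int}.

Section Networks.
Variable R : realType.
Variable S : finType.

Definition chem_network (Rs : {fset vec S}) : Prop :=
  forall r, r \in Rs -> r != 0.

Definition rates_pos (Rs : {fset vec S}) (K : vec S -> R) : Prop :=
  forall r, r \in Rs -> 0 < K r.

Definition bidirectional (Rs : {fset vec S}) : Prop :=
  forall r, r \in Rs -> - r \in Rs.

(* detailed balance (presupposes bidirectionality); the defining identity is
   symmetric under r <-> -r, so requiring it for all r is the same as for R_s *)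
Definition detailed_balance (Rs : {fset vec S}) (K : vec S -> R) : Prop :=
  bidirectional Rs /\
  exists Nbar : S -> R, (forall i, 0 < Nbar i) /\
    forall r, r \in Rs ->
      K r * \prod_(i | r i < 0) Nbar i ^ (- r i)
      = K (- r) * \prod_(i | 0 < r i) Nbar i ^ (r i).

Definition conservative (Rs : {fset vec S}) : Prop :=
  exists m : S -> R, (forall i, 0 < m i) /\
    forall r, r \in Rs -> \sum_i m i * (r i)%:~R = 0.

Definition closed_system (Rs : {fset vec S}) (K : vec S -> R) : Prop :=
  [/\ detailed_balance Rs K, conservative Rs &
      forall r, r \in Rs -> (exists i, r i < 0) /\ (exists i, 0 < r i)].

End Networks.

(* Omega = 'I_N, Omega_c = 'I_N + 'I_M (Omega embedded via inl) *)
Definition proj (N M : nat) (v : vec ('I_N + 'I_M)%type) : vec 'I_N :=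
  [ffun i => v (inl i)].

Definition reduced_rates (R : realType) (N M : nat)
  (Rc : {fset vec ('I_N + 'I_M)%type}) (Kc : vec ('I_N + 'I_M)%type -> R)
  (n : 'I_M -> R) (r : vec 'I_N) : R :=
  \sum_(rb : Rc | proj (val rb) == r)
     Kc (val rb) * \prod_(s : 'I_M | val rb (inr s) < 0) n s ^ (- val rb (inr s)).

Definition completion (R : realType) (N M : nat)
  (Rs : {fset vec 'I_N}) (K : vec 'I_N -> R)
  (Rc : {fset vec ('I_N + 'I_M)%type}) (Kc : vec ('I_N + 'I_M)%type -> R) : Prop :=
  chem_network Rc /\ rates_pos Rc Kc /\
  Rs = [fset proj rb | rb in Rc] /\
  exists n : 'I_M -> R, (forall s, 0 < n s) /\
    forall r, r \in Rs -> K r = reduced_rates Rc Kc n r.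

(* Main.v *)
Require Import Defs.
From HB Require Import structures.
From mathcomp Require Import all_boot all_order all_algebra.
From mathcomp Require Import finmap.
From mathcomp Require Import reals.
From mathcomp Require Import zify ring lra.
Import Order.TTheory GRing.Theory Num.Theory.
Local Open Scope ring_scope.
Local Open Scope fset_scope.
Set Implicit Arguments. Unset Strict Implicit. Unset Printing Implicit Defensive.

Definition ent (j a b : nat) : int :=
  (nat_of_bool (j == b))%:Z - (nat_of_bool (j == a))%:Z.

Lemma ent_neg j a b : a != b -> (ent j a b < 0) = (j == a).
Proof.
rewrite /ent => hne; case: (eqVneq j a) => [->|n1]; first by rewrite (negPf hne).
by case: (j == b).
Qed.

Lemma ent_a a b : a != b -> ent a a b = -1.
Proof. by rewrite /ent eqxx => /negPf ->. Qed.

Lemma ent_b a b : a != b -> ent b a b = 1.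
Proof. by rewrite /ent eqxx eq_sym => /negPf ->. Qed.

Lemma ent_0 j a b : j != a -> j != b -> ent j a b = 0.
Proof. by rewrite /ent => /negPf -> /negPf ->. Qed.

Definition liftv (N : nat) (s : seq (vec 'I_N)) (r : vec 'I_N) :
  vec ('I_N + 'I_(size s))%type :=
  [ffun x => match x with
             | inl i => r i
             | inr j => ent (nat_of_ord j) (index r s) (index (- r) s) end].

Lemma proj_lift N (s : seq (vec 'I_N)) r : proj (liftv s r) = r.
Proof. by apply/ffunP => i; rewrite !ffunE. Qed.

Lemma lift_opp N (s : seq (vec 'I_N)) r : liftv s (- r) = - liftv s r.
Proof.
apply/ffunP => [[i|j]]; rewrite !ffunE ?opprK // /ent.
by rewrite opprB.
Qed.

Lemma neq_opp N (r : vec 'I_N) : r != 0 -> r != - r.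
Proof.
move=> /eqP rn0; apply/eqP => h; apply: rn0; apply/ffunP => i.
have := congr1 (fun f : vec 'I_N => f i) h; rewrite !ffunE => hi.
by apply/eqP; move/eqP: hi; rewrite -subr_eq0 opprK -mulr2n mulrn_eq0.
Qed.

Lemma lift_inr N (s : seq (vec 'I_N)) r (j : 'I_(size s)) :
  liftv s r (inr j) = ent (nat_of_ord j) (index r s) (index (- r) s).
Proof. by rewrite ffunE. Qed.

Lemma proj0 N M : proj (0 : vec ('I_N + 'I_M)%type) = 0.
Proof. by apply/ffunP => i; rewrite !ffunE. Qed.

Definition sumv (R : realType) N (v : vec 'I_N) : R := (\sum_i v i)%:~R.

Lemma sumvN (R : realType) N (v : vec 'I_N) : sumv R (- v) = - sumv R v.
Proof.
rewrite /sumv (eq_bigr (fun i => - v i)) ?sumrN ?mulrNz // => i _.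
by rewrite ffunE.
Qed.

Theorem theorem6p3 (R : realType) (N : nat)
  (Rs : {fset vec 'I_N}) (K : vec 'I_N -> R) :
  chem_network Rs -> rates_pos Rs K -> bidirectional Rs ->
  exists (M : nat) (Rc : {fset vec ('I_N + 'I_M)%type})
         (Kc : vec ('I_N + 'I_M)%type -> R),
    [/\ completion Rs K Rc Kc,
        closed_system Rc Kc,
        (forall rb, rb \in Rc -> proj rb != 0) &
        (forall r, r \in Rs ->
           exists! rb, rb \in Rc /\ proj rb = r)].
Proof.
move=> Hnet Hpos Hbi.
set s := enum_fset Rs.
have memS : forall r, (r \in Rs) = (r \in s) by [].
set Rc := [fset liftv s r | r in Rs].
have RcP : forall rb, reflect (exists2 r, r \in Rs & rb = liftv s r) (rb \in Rc).
  move=> rb; rewrite /Rc; apply: (iffP idP) => [/imfsetP [x H1 H2]|[r Hr ->]]; [by exists x | by apply/imfsetP; exists r].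
have liftRc : forall r, r \in Rs -> liftv s r \in Rc.
  by move=> r Hr; apply/RcP; exists r.
have idx_lt : forall r, r \in Rs -> (index r s < size s)%N.
  by move=> r; rewrite memS index_mem.
have nth_idx : forall r, r \in Rs -> nth 0 s (index r s) = r.
  by move=> r; rewrite memS => /nth_index.
have idx_neq : forall r, r \in Rs -> index r s != index (- r) s.
  move=> r Hr; apply/eqP => h.
  have := nth_idx _ Hr; rewrite h nth_idx ?Hbi // => /eqP.
  by rewrite eq_sym; apply/negP/neq_opp/Hnet.
exists (size s), Rc, (fun _ => 1).
split.
- split.
    move=> rb /RcP [r Hr ->]; apply/eqP => h.
    have := Hnet r Hr; rewrite -(proj_lift s r) h.
    by rewrite proj0 eqxx.
  split; first by move=> _ _; exact: ltr01.
  split.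
    apply/fsetP => r; apply/idP/imfsetP => /=.
      by move=> Hr; exists (liftv s r); [exact: liftRc | rewrite proj_lift].
    by move=> [rb /RcP [r' Hr' ->] ->]; rewrite proj_lift.
  exists (fun j => K (nth 0 s j)); split.
    by move=> j; apply: Hpos; rewrite memS mem_nth.
  move=> r Hr; rewrite /reduced_rates.
  rewrite (big_pred1 [` liftRc r Hr]) /=; last first.
    move=> rb /=; rewrite -val_eqE /=.
    case: rb => rb /= /RcP [r' Hr' ->] /=.
    rewrite proj_lift; apply/eqP/eqP => [->|h] //.
    by rewrite -(proj_lift s r') h proj_lift.
  rewrite mul1r (big_pred1 (Ordinal (idx_lt r Hr))) /=; last first.
    move=> j /=; rewrite lift_inr -val_eqE /=.
    have := idx_neq r Hr.
    by move=> h; rewrite ent_neg.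
  by rewrite lift_inr /= ent_a ?idx_neq // opprK expr1z nth_idx.
- split.
  + split.
      move=> rb /RcP [r Hr ->]; rewrite -lift_opp; apply: liftRc; exact: Hbi.
    exists (fun _ => 1); split; first by move=> _; exact: ltr01.
    by move=> rb _; rewrite !big1 // => i _; rewrite exp1rz.
  + pose c : R := (1 + \sum_(j < size s) `|sumv R (nth 0 s j)|)%R.
    exists (fun x : ('I_N + 'I_(size s))%type => match x with inl _ => 1 | inr j => (c + sumv R (nth 0 s j) / 2)%R end).
    split.
      case=> [_|j]; first exact: ltr01.
      have hle : `|sumv R (nth 0 s j)| <= \sum_(j < size s) `|sumv R (nth 0 s j)|.
        by rewrite (bigD1 j) //= lerDl sumr_ge0.
      have h1 := ler_norm (- sumv R (nth 0 s j)); rewrite normrN in h1.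
      have h2 : 0 <= `|sumv R (nth 0 s j)| by [].
      rewrite /c; lra.
    move=> rb /RcP [r Hr ->].
    rewrite big_sumType /=.
    set A := Ordinal (idx_lt r Hr).
    have HrN : - r \in Rs by exact: Hbi.
    set B := Ordinal (idx_lt (- r) HrN).
    have hAB : B != A by rewrite -val_eqE /= eq_sym idx_neq.
    have -> : (\sum_(i < N) 1 * (liftv s r (inl i))%:~R)%R = sumv R r :> R.
      by rewrite /sumv rmorph_sum; apply: eq_bigr => i _; rewrite ffunE mul1r.
    rewrite (bigD1 A) //= (bigD1 B) //= big1; last first.
      by move=> j /andP [hjA hjB]; rewrite lift_inr ent_0 ?mulr0.
    rewrite !lift_inr /= ent_a ?idx_neq // ent_b ?idx_neq //.
    rewrite nth_idx // nth_idx // sumvN.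
    set x := sumv R r; rewrite addr0.
    have -> : ((-1 : int)%:~R : R) = -1 by [].
    have -> : ((1 : int)%:~R : R) = 1 by [].
    lra.
  + move=> rb /RcP [r Hr ->].
    split.
      exists (inr (Ordinal (idx_lt r Hr))); rewrite lift_inr ent_a ?idx_neq //.
    have HrN : - r \in Rs by exact: Hbi.
    exists (inr (Ordinal (idx_lt (- r) HrN))); rewrite lift_inr ent_b ?idx_neq //.
- by move=> rb /RcP [r Hr ->]; rewrite proj_lift; exact: Hnet.
- move=> r Hr; exists (liftv s r); split; first by split; [exact: liftRc | exact: proj_lift].
  by move=> rb [/RcP [r' Hr' ->] <-]; rewrite !proj_lift.
Qed.
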